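(* If a segment $s_i$ contains a reflection point $p_j$ of $\mathrm{OPT}$, then $s_i$ has no other intersection with $\mathrm{OPT}$; in particular no other point $p_{j'}$ of $\mathrm{OPT}$ lies on $s_i$.
   Context: Instance: vertical line segments $s_1,\dots,s_n$ in $\mathbb{R}^2$, each of length $1$, with pairwise distinct $x$-coordinates. A tour is a cyclic sequence of points $p_1,\dots,p_\sigma$, each on some segment, with every segment containing at least one $p_j$; the straight segments joining consecutive points are legs; cost is total length. $\mathrm{OPT}$ is a fixed minimum-cost tour, oriented, with no two consecutive points on the same segment and not self-crossing. A point $p_j$ of $\mathrm{OPT}$ on segment $s$ is a reflection point if both incident legs lie in the half-plane $x\le x(s)$ or both lie in $x\ge x(s)$. *)

(* Defs.v *)
From Stdlib Require Import Reals Lra Lia.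
Open Scope R_scope.

Definition pt := (R * R)%type.

(* Instance: segment s_i (for i < n) is {(xs i, t) | ys i <= t <= ys i + 1}
   (vertical, length 1); xs i is its x-coordinate, ys i its lower endpoint. *)
Definition on_seg (xs ys : nat -> R) (i : nat) (q : pt) : Prop :=
  fst q = xs i /\ ys i <= snd q <= ys i + 1.

Definition dist (a b : pt) : R :=
  sqrt ((fst a - fst b) ^ 2 + (snd a - snd b) ^ 2).

Definition nxt (sigma j : nat) : nat := Nat.modulo (S j) sigma.
Definition prv (sigma j : nat) : nat := Nat.modulo (j + sigma - 1) sigma.

Fixpoint sumR (k : nat) (f : nat -> R) : R :=
  match k with O => 0 | S k' => sumR k' f + f k' end.

Definition cost (sigma : nat) (p : nat -> pt) : R :=
  sumR sigma (fun j => dist (p j) (p (nxt sigma j))).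

Definition is_tour (n : nat) (xs ys : nat -> R) (sigma : nat) (p : nat -> pt) : Prop :=
  (0 < sigma)%nat /\
  (forall j, (j < sigma)%nat -> exists i, (i < n)%nat /\ on_seg xs ys i (p j)) /\
  (forall i, (i < n)%nat -> exists j, (j < sigma)%nat /\ on_seg xs ys i (p j)).

Definition on_leg (a b z : pt) : Prop :=
  exists t, 0 <= t <= 1 /\
    z = (fst a + t * (fst b - fst a), snd a + t * (snd b - snd a)).

Definition orient (a b c : pt) : R :=
  (fst b - fst a) * (snd c - snd a) - (snd b - snd a) * (fst c - fst a).

Definition crosses (a b c d : pt) : Prop :=
  orient a b c * orient a b d < 0 /\ orient c d a * orient c d b < 0.

Definition non_self_crossing (sigma : nat) (p : nat -> pt) : Prop :=
  forall j k, (j < sigma)%nat -> (k < sigma)%nat ->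
    ~ crosses (p j) (p (nxt sigma j)) (p k) (p (nxt sigma k)).

Definition no_consecutive_same_segment (n : nat) (xs ys : nat -> R)
    (sigma : nat) (p : nat -> pt) : Prop :=
  forall j i, (j < sigma)%nat -> (i < n)%nat ->
    on_seg xs ys i (p j) -> ~ on_seg xs ys i (p (nxt sigma j)).

Definition leg_le (a b : pt) (c : R) : Prop := fst a <= c /\ fst b <= c.
Definition leg_ge (a b : pt) (c : R) : Prop := c <= fst a /\ c <= fst b.

Definition reflection_point (xs : nat -> R) (i : nat) (sigma : nat)
    (p : nat -> pt) (j : nat) : Prop :=
  (leg_le (p (prv sigma j)) (p j) (xs i) /\ leg_le (p j) (p (nxt sigma j)) (xs i)) \/
  (leg_ge (p (prv sigma j)) (p j) (xs i) /\ leg_ge (p j) (p (nxt sigma j)) (xs i)).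

(* Main.v *)
Require Import Defs.
From Stdlib Require Import Reals.
Open Scope R_scope.
From Stdlib Require Import Lra Lia Arith Classical.
Import Defs.

Lemma nxt_cases s m : (m < s)%nat ->
  ((S m < s)%nat /\ nxt s m = S m) \/ (S m = s /\ nxt s m = 0%nat).
Proof.
  intros H; unfold nxt. destruct (Nat.eq_dec (S m) s) as [E|E].
  - right; split; auto. rewrite E. apply Nat.Div0.mod_same.
  - left; split; [lia|]. apply Nat.mod_small; lia.
Qed.

Lemma prv_cases s j : (j < s)%nat ->
  (j = 0%nat /\ prv s j = (s - 1)%nat) \/ ((0 < j)%nat /\ prv s j = (j - 1)%nat).
Proof.
  intros H; unfold prv. destruct j as [|j].
  - left; split; auto. apply Nat.mod_small; lia.
  - right; split; [lia|].
    replace (S j + s - 1)%nat with (j + 1 * s)%nat by lia.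
    rewrite Nat.Div0.mod_add. rewrite Nat.mod_small; lia.
Qed.

Lemma nxt_lt s m : (m < s)%nat -> (nxt s m < s)%nat.
Proof. intros H; destruct (nxt_cases s m H) as [[A B]|[A B]]; lia. Qed.

Lemma prv_lt s m : (m < s)%nat -> (prv s m < s)%nat.
Proof. intros H; destruct (prv_cases s m H) as [[A B]|[A B]]; lia. Qed.

Lemma nxt_prv s j : (j < s)%nat -> nxt s (prv s j) = j.
Proof.
  intros H. pose proof (prv_lt s j H).
  destruct (prv_cases s j H) as [[A B]|[A B]]; rewrite B in *;
  destruct (nxt_cases s _ H0) as [[C D]|[C D]]; lia.
Qed.

Lemma nxt_inj s m m' : (m < s)%nat -> (m' < s)%nat -> nxt s m = nxt s m' -> m = m'.
Proof.
  intros H H'; destruct (nxt_cases s m H) as [[A B]|[A B]];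
  destruct (nxt_cases s m' H') as [[C D]|[C D]]; lia.
Qed.

Lemma dist_self a : dist a a = 0.
Proof. unfold dist. replace ((fst a - fst a)^2 + (snd a - snd a)^2) with 0 by ring. apply sqrt_0. Qed.

Lemma dist_nonneg a b : 0 <= dist a b.
Proof. unfold dist; apply sqrt_pos. Qed.

Lemma aux_ineq x1 y1 x2 y2 : (y1*y2) * (y1*y2) <= (x1^2+y1^2)*(x2^2+y2^2).
Proof.
  assert (0 <= (x1*x2)^2 + (x1*y2)^2 + (y1*x2)^2) by
   (pose proof (pow2_ge_0 (x1*x2)); pose proof (pow2_ge_0 (x1*y2)); pose proof (pow2_ge_0 (y1*x2)); lra).
  replace ((x1^2+y1^2)*(x2^2+y2^2)) with ((y1*y2)*(y1*y2) + ((x1*x2)^2 + (x1*y2)^2 + (y1*x2)^2)) by ring.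
  lra.
Qed.

Lemma tri_strict (a b c : pt) :
  (fst b < fst a /\ fst c < fst a) \/ (fst a < fst b /\ fst a < fst c) ->
  dist b c < dist b a + dist a c.
Proof.
  intros Hs. unfold dist.
  set (A := (fst b - fst a)^2 + (snd b - snd a)^2).
  set (B := (fst a - fst c)^2 + (snd a - snd c)^2).
  assert (HA : 0 <= A) by (unfold A; pose proof (pow2_ge_0 (fst b - fst a)); pose proof (pow2_ge_0 (snd b - snd a)); lra).
  assert (HB : 0 <= B) by (unfold B; pose proof (pow2_ge_0 (fst a - fst c)); pose proof (pow2_ge_0 (snd a - snd c)); lra).
  pose proof (sqrt_pos A). pose proof (sqrt_pos B).
  pose proof (pow2_sqrt A HA). pose proof (pow2_sqrt B HB).
  set (w := (snd b - snd a) * (snd a - snd c)).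
  assert (Hw : w <= sqrt A * sqrt B).
  { rewrite <- sqrt_mult by auto.
    apply Rle_trans with (Rabs w); [apply Rle_abs|].
    rewrite <- sqrt_Rsqr_abs. apply sqrt_le_1_alt. unfold Rsqr, w, A, B. apply aux_ineq. }
  rewrite <- (sqrt_pow2 (sqrt A + sqrt B)) by lra.
  apply sqrt_lt_1; [pose proof (pow2_ge_0 (fst b - fst c)); pose proof (pow2_ge_0 (snd b - snd c)); lra| apply pow2_ge_0 |].
  assert (Hx : (fst b - fst a) * (fst a - fst c) < 0) by (destruct Hs; nra).
  replace ((sqrt A + sqrt B)^2) with (sqrt A ^2 + sqrt B ^2 + 2 * (sqrt A * sqrt B)) by ring.
  rewrite H1, H2.
  replace ((fst b - fst c) ^ 2 + (snd b - snd c) ^ 2) with (A + B + 2 * ((fst b - fst a) * (fst a - fst c) + w)) by (unfold A, B, w; ring).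
  lra.
Qed.

Lemma on_leg_dist a b z : on_leg a b z -> dist a z + dist z b = dist a b.
Proof.
  intros [t [Ht ->]]. unfold dist; cbn [fst snd].
  set (D := (fst a - fst b)^2 + (snd a - snd b)^2).
  assert (HD : 0 <= D) by (unfold D; pose proof (pow2_ge_0 (fst a - fst b)); pose proof (pow2_ge_0 (snd a - snd b)); lra).
  replace ((fst a - (fst a + t * (fst b - fst a))) ^ 2 + (snd a - (snd a + t * (snd b - snd a))) ^ 2)
    with (t^2 * D) by (unfold D; ring).
  replace ((fst a + t * (fst b - fst a) - fst b) ^ 2 + (snd a + t * (snd b - snd a) - snd b) ^ 2)
    with ((1-t)^2 * D) by (unfold D; ring).
  rewrite !sqrt_mult by (auto; apply pow2_ge_0). rewrite !sqrt_pow2 by lra. unfold D. ring.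
Qed.

Lemma sumR_ext k f g : (forall m, (m < k)%nat -> f m = g m) -> sumR k f = sumR k g.
Proof.
  induction k; simpl; intros H; auto.
  rewrite IHk by (intros; apply H; lia). rewrite H by lia. auto.
Qed.

Lemma sumR_sub k f g : sumR k f - sumR k g = sumR k (fun m => f m - g m).
Proof. induction k; simpl. ring. rewrite <- IHk. ring. Qed.

Lemma sumR_split a b f : sumR (a + b) f = sumR a f + sumR b (fun m => f (a + m)%nat).
Proof.
  induction b; simpl. rewrite Nat.add_0_r. ring.
  rewrite Nat.add_succ_r. simpl. rewrite IHb. ring.
Qed.

Lemma sumR_two k h a b : (a < k)%nat -> (b < k)%nat -> a <> b ->
  (forall m, (m < k)%nat -> m <> a -> m <> b -> h m = 0) -> sumR k h = h a + h b.
Proof.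
  revert a b. induction k; intros a b Ha Hb Hab H; [lia|].
  simpl.
  destruct (Nat.eq_dec k a) as [E|E]; [subst|];
  [|destruct (Nat.eq_dec k b) as [E'|E']; [subst|]].
  - assert (sumR a h = h b + 0) as ->.
    { clear IHk. assert (forall k0, (b < k0)%nat -> (k0 <= a)%nat -> sumR k0 h = h b + 0).
      { induction k0; intros; [lia|]. simpl.
        destruct (Nat.eq_dec k0 b); [subst|].
        - assert (sumR b h = 0). { clear -H H1 Ha. assert (forall k1, (k1 <= b)%nat -> sumR k1 h = 0).
            { induction k1; intros; simpl; auto. rewrite IHk1 by lia. rewrite H by lia. ring. }
            apply H0; lia. }
          rewrite H2. ring.
        - rewrite IHk0 by lia. rewrite (H k0) by lia. ring. }
      apply H0; lia. }
    ring.
  - assert (sumR b h = h a + 0) as ->.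
    { clear IHk. assert (forall k0, (a < k0)%nat -> (k0 <= b)%nat -> sumR k0 h = h a + 0).
      { induction k0; intros; [lia|]. simpl.
        destruct (Nat.eq_dec k0 a); [subst|].
        - assert (sumR a h = 0). { clear -H H1 Hb. assert (forall k1, (k1 <= a)%nat -> sumR k1 h = 0).
            { induction k1; intros; simpl; auto. rewrite IHk1 by lia. rewrite H by lia. ring. }
            apply H0; lia. }
          rewrite H2. ring.
        - rewrite IHk0 by lia. rewrite (H k0) by lia. ring. }
      apply H0; lia. }
    ring.
  - rewrite (IHk a b) by (auto; lia). rewrite (H k) by lia. ring.
Qed.

Definition repl (r : nat -> pt) (a : nat) (v : pt) : nat -> pt :=
  fun m => if Nat.eq_dec m a then v else r m.

Lemma repl_cost s r a b : (a < s)%nat -> (b < s)%nat -> nxt s b = a -> a <> b ->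
  nxt s a <> a ->
  dist (r b) (r (nxt s a)) < dist (r b) (r a) + dist (r a) (r (nxt s a)) ->
  cost s (repl r a (r b)) < cost s r.
Proof.
  intros Ha Hb Hba Hab Hna Htri.
  cut (cost s (repl r a (r b)) - cost s r < 0); [lra|].
  unfold cost. rewrite sumR_sub.
  rewrite (sumR_two s _ a b); auto.
  2:{ intros m Hm H1 H2; unfold repl.
     destruct (Nat.eq_dec m a); [congruence|].
     destruct (Nat.eq_dec (nxt s m) a) as [E|E].
     - exfalso; apply H2; apply (nxt_inj s); congruence.
     - ring. }
  unfold repl. rewrite Hba.
  destruct (Nat.eq_dec a a); [|congruence].
  destruct (Nat.eq_dec (nxt s a) a); [congruence|].
  destruct (Nat.eq_dec b a); [congruence|].
  rewrite dist_self. lra.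
Qed.

Definition ins (r : nat -> pt) (k : nat) (z : pt) : nat -> pt :=
  fun m => if Nat.leb m k then r m else if Nat.eqb m (S k) then z else r (m - 1)%nat.

Lemma ins_le r k z m : (m <= k)%nat -> ins r k z m = r m.
Proof. intros; unfold ins. replace (Nat.leb m k) with true; auto. symmetry; apply Nat.leb_le; auto. Qed.

Lemma ins_Sk r k z : ins r k z (S k) = z.
Proof. unfold ins. replace (Nat.leb (S k) k) with false by (symmetry; apply Nat.leb_gt; lia).
  rewrite Nat.eqb_refl. auto. Qed.

Lemma ins_gt r k z m : (S k < m)%nat -> ins r k z m = r (m - 1)%nat.
Proof. intros; unfold ins. replace (Nat.leb m k) with false by (symmetry; apply Nat.leb_gt; lia).
  replace (Nat.eqb m (S k)) with false by (symmetry; apply Nat.eqb_neq; lia). auto. Qed.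

Lemma ins_cost s r k z : (k < s)%nat -> on_leg (r k) (r (nxt s k)) z ->
  cost (S s) (ins r k z) = cost s r.
Proof.
  intros Hk Hz. unfold cost.
  set (F := fun j => dist (r j) (r (nxt s j))).
  set (G := fun j => dist (ins r k z j) (ins r k z (nxt (S s) j))).
  assert (E1: sumR s F = sumR (S k + (s - S k)) F) by (f_equal; lia).
  assert (E2: sumR (S s) G = sumR (S k + (1 + (s - S k))) G) by (f_equal; lia).
  rewrite E1, E2, !sumR_split. simpl (sumR (S k) _). simpl (sumR 1 _).
  rewrite (sumR_ext k G F).
  2:{ intros m Hm. unfold F, G. destruct (nxt_cases (S s) m ltac:(lia)) as [[A B]|[A B]]; [|lia].
      destruct (nxt_cases s m ltac:(lia)) as [[C D]|[C D]]; [|lia].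
      rewrite B, D, !ins_le by lia. auto. }
  rewrite (sumR_ext (s - S k) (fun m => G (S k + (1 + m))%nat) (fun m => F (S k + m)%nat)).
  2:{ intros m Hm. unfold F, G. rewrite ins_gt by lia.
      replace (S k + (1 + m) - 1)%nat with (S k + m)%nat by lia.
      destruct (nxt_cases (S s) (S k + (1 + m)) ltac:(lia)) as [[A B]|[A B]];
      destruct (nxt_cases s (S k + m) ltac:(lia)) as [[C D]|[C D]]; try lia; rewrite B, D.
      - rewrite ins_gt by lia. f_equal; f_equal; lia.
      - rewrite ins_le by lia. auto. }
  unfold F, G. rewrite Nat.add_0_r.
  rewrite <- (on_leg_dist _ _ _ Hz).
  destruct (nxt_cases (S s) k ltac:(lia)) as [[A B]|[A B]]; [|lia].
  rewrite B, ins_le, ins_Sk by lia.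
  destruct (nxt_cases (S s) (S k) ltac:(lia)) as [[C D]|[C D]];
  destruct (nxt_cases s k ltac:(lia)) as [[E F']|[E F']]; try lia; rewrite D, F'.
  - rewrite ?ins_Sk, ins_gt by lia. replace (S (S k) - 1)%nat with (S k) by lia. ring.
  - rewrite ?ins_Sk, ins_le by lia. ring.
Qed.

Theorem lemma7 (n : nat) (xs ys : nat -> R)
  (Hdistinct : forall i i', (i < n)%nat -> (i' < n)%nat -> i <> i' -> xs i <> xs i')
  (sigma : nat) (p : nat -> pt)
  (Htour : is_tour n xs ys sigma p)
  (Hopt : forall sigma' q, is_tour n xs ys sigma' q -> cost sigma p <= cost sigma' q)
  (Hcons : no_consecutive_same_segment n xs ys sigma p)
  (Hcross : non_self_crossing sigma p)
  (i j : nat) (Hi : (i < n)%nat) (Hj : (j < sigma)%nat)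
  (Hon : on_seg xs ys i (p j))
  (Hrefl : reflection_point xs i sigma p j) :
  (forall k z, (k < sigma)%nat -> on_leg (p k) (p (nxt sigma k)) z ->
      on_seg xs ys i z -> z = p j) /\
  (forall j', (j' < sigma)%nat -> j' <> j -> ~ on_seg xs ys i (p j')).
Proof.
  pose proof Htour as Htour'.
  destruct Htour as [Hpos [Hpts Hcov]].
  set (b := prv sigma j). set (c := nxt sigma j).
  assert (Hb : (b < sigma)%nat) by (apply prv_lt; auto).
  assert (Hc : (c < sigma)%nat) by (apply nxt_lt; auto).
  assert (Hnb : nxt sigma b = j) by (apply nxt_prv; auto).
  assert (Hcj : c <> j).
  { intro E. pose proof (Hcons j i Hj Hi Hon). unfold c in E. rewrite E in H. auto. }
  assert (Hbj : b <> j).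
  { intro E. rewrite E in Hnb. apply Hcj. exact Hnb. }
  assert (Hbnot : ~ on_seg xs ys i (p b)).
  { intro H. apply (Hcons b i Hb Hi H). rewrite Hnb. auto. }
  assert (Hcnot : ~ on_seg xs ys i (p c)) by (apply (Hcons j i Hj Hi Hon)).
  assert (Hxj : fst (p j) = xs i) by (destruct Hon; auto).
  assert (Hxne : forall m, (m < sigma)%nat -> ~ on_seg xs ys i (p m) -> fst (p m) <> xs i).
  { intros m Hm Hnot E. destruct (Hpts m Hm) as [i1 [Hi1 Hs1]].
    destruct (Nat.eq_dec i1 i) as [->|Hne]; [auto|].
    apply (Hdistinct i1 i Hi1 Hi Hne). destruct Hs1 as [Hs1 _]. congruence. }
  pose proof (Hxne b Hb Hbnot) as Hxb. pose proof (Hxne c Hc Hcnot) as Hxc.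
  assert (Hside : (fst (p b) < fst (p j) /\ fst (p c) < fst (p j)) \/
                  (fst (p j) < fst (p b) /\ fst (p j) < fst (p c))).
  { unfold reflection_point, leg_le, leg_ge in Hrefl. fold b c in Hrefl.
    destruct Hrefl as [[[A _] [_ B]]|[[A _] [_ B]]]; [left|right];
    rewrite Hxj; split;
    match goal with |- ?x < ?y => destruct (Rle_lt_or_eq_dec x y); auto; try lra; exfalso;
      first [apply Hxb | apply Hxc]; congruence end. }
  assert (Hcost : cost sigma (repl p j (p b)) < cost sigma p).
  { apply (repl_cost sigma p j b Hj Hb Hnb (fun E => Hbj (eq_sym E)) Hcj).
    apply tri_strict; auto. }
  assert (Hseg_i : forall i'', (i'' < n)%nat -> on_seg xs ys i'' (p j) -> i'' = i).
  { intros i'' Hi'' Hs. destruct (Nat.eq_dec i'' i) as [->|Hne]; auto.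
    exfalso. apply (Hdistinct i'' i Hi'' Hi Hne). destruct Hs. congruence. }
  assert (Key : forall k z, (k < sigma)%nat -> k <> j -> k <> b ->
     on_leg (p k) (p (nxt sigma k)) z -> on_seg xs ys i z -> False).
  { intros k z Hk Hkj Hkb Hz Hzs.
    set (r := repl p j (p b)).
    assert (Hrk : r k = p k) by (unfold r, repl; destruct (Nat.eq_dec k j); congruence).
    assert (Hrnk : r (nxt sigma k) = p (nxt sigma k)).
    { unfold r, repl; destruct (Nat.eq_dec (nxt sigma k) j) as [E|E]; auto.
      exfalso. apply Hkb. apply (nxt_inj sigma); auto. congruence. }
    rewrite <- Hrk, <- Hrnk in Hz.
    assert (Hrpts : forall m, (m < sigma)%nat -> exists i1, (i1 < n)%nat /\ on_seg xs ys i1 (r m)).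
    { intros m Hm. unfold r, repl. destruct (Nat.eq_dec m j); auto. }
    assert (HT : is_tour n xs ys (S sigma) (ins r k z)).
    { split; [lia|split].
      - intros m Hm. destruct (le_lt_dec m k).
        + rewrite ins_le by auto. apply Hrpts; lia.
        + destruct (Nat.eq_dec m (S k)) as [->|Hne].
          * rewrite ins_Sk. exists i; auto.
          * rewrite ins_gt by lia. apply Hrpts; lia.
      - intros i'' Hi''. destruct (Hcov i'' Hi'') as [m [Hm Hs]].
        destruct (Nat.eq_dec m j) as [->|Hmj].
        + rewrite (Hseg_i i'' Hi'' Hs). exists (S k). split; [lia|]. rewrite ins_Sk; auto.
        + assert (Hr : r m = p m) by (unfold r, repl; destruct (Nat.eq_dec m j); congruence).
          destruct (le_lt_dec m k).
          * exists m. split; [lia|]. rewrite ins_le, Hr by auto. auto.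
          * exists (S m). split; [lia|]. rewrite ins_gt by lia. replace (S m - 1)%nat with m by lia.
            rewrite Hr; auto. }
    pose proof (Hopt _ _ HT). rewrite ins_cost in H by auto. fold r in Hcost. lra. }
  split.
  - intros k z Hk Hz Hzs.
    destruct (classic (z = p j)) as [E|Hne]; auto. exfalso.
    destruct (Nat.eq_dec k j) as [->|Hkj].
    + apply Hne. destruct Hz as [t [Ht Ez]]. fold c in Ez.
      assert (fst z = xs i) by (destruct Hzs; auto).
      rewrite Ez in H; simpl in H.
      assert (t * (fst (p c) - fst (p j)) = 0) by lra.
      apply Rmult_integral in H0. destruct H0 as [H0|H0]; [|exfalso; apply Hxc; lra].
      rewrite Ez, H0. destruct (p j); simpl; f_equal; ring.
    + destruct (Nat.eq_dec k b) as [->|Hkb].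
      * apply Hne. destruct Hz as [t [Ht Ez]]. rewrite Hnb in Ez.
        assert (fst z = xs i) by (destruct Hzs; auto).
        rewrite Ez in H; simpl in H.
        assert ((1 - t) * (fst (p j) - fst (p b)) = 0) by lra.
        apply Rmult_integral in H0. destruct H0 as [H0|H0]; [|exfalso; apply Hxb; lra].
        replace t with 1 in Ez by lra.
        rewrite Ez. destruct (p j), (p b); simpl; f_equal; ring.
      * exact (Key k z Hk Hkj Hkb Hz Hzs).
  - intros j' Hj' Hne Hs.
    destruct (Nat.eq_dec j' b) as [->|Hjb]; [auto|].
    apply (Key j' (p j') Hj' Hne Hjb); auto.
    exists 0. split; [lra|]. destruct (p j'); simpl; f_equal; ring.
Qed.
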